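(* Let $K\ge2$, $r\in[0,1]^K$, $a^*\in\arg\max_{a\in[K]}r(a)$, and $\Delta := r(a^* )-\max_{a\ne a^*}r(a)$. Then for any probability vector $\pi$ on $[K]$, $$\sum_{i=1}^K\pi(i)^2\left|r(i)-\pi^\top r\right|^3\ge\frac{\Delta}{K-1}\,\pi(a^* )^2\left(r(a^* )-\pi^\top r\right)^2.$$ *)

(* Defs.v *)
From mathcomp Require Import all_boot all_order all_algebra.
Set Implicit Arguments. Unset Strict Implicit. Unset Printing Implicit Defensive.
Import Order.TTheory GRing.Theory Num.Theory.
Local Open Scope ring_scope.

Definition dotv (R : realFieldType) (K : nat) (pi r : 'I_K -> R) : R :=
  \sum_(i < K) pi i * r i.

Definition prob_vec (R : realFieldType) (K : nat) (pi : 'I_K -> R) : Prop :=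
  (forall i, 0 <= pi i) /\ \sum_(i < K) pi i = 1.

(* max_{a <> astar} r a ; since r takes values in [0,1] and K >= 2,
   folding Num.max from 0 gives exactly the maximum *)
Definition max_other (R : realFieldType) (K : nat) (r : 'I_K -> R) (astar : 'I_K) : R :=
  \big[Num.max/0]_(a < K | a != astar) r a.

Definition gap (R : realFieldType) (K : nat) (r : 'I_K -> R) (astar : 'I_K) : R :=
  r astar - max_other r astar.

(* Main.v *)
Require Import Defs.
From mathcomp Require Import all_boot all_order all_algebra.
From mathcomp Require Import ring lra.
Import Order.TTheory GRing.Theory Num.Theory.
Local Open Scope ring_scope.

Lemma cs_sum (R : realFieldType) (I : finType) (P : pred I) (x : I -> R) :
  (\sum_(i | P i) x i) ^+ 2 <= #|P|%:R * \sum_(i | P i) x i ^+ 2.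
Proof.
set s := \sum_(i | P i) x i; set Q := \sum_(i | P i) x i ^+ 2.
case: (posnP #|P|) => [c0|cp].
  have -> : s = 0.
    rewrite /s big_pred0 // => i; have := card0_eq c0 i; rewrite !inE //.
  by rewrite c0 mul0r expr0n.
set n := #|P|%:R.
have n0 : 0 < n by rewrite ltr0n.
set c := s / n.
have H : 0 <= \sum_(i | P i) (x i - c) ^+ 2 by apply: sumr_ge0 => i _; apply: sqr_ge0.
have E : \sum_(i | P i) (x i - c) ^+ 2 = Q - 2 * c * s + n * c ^+ 2.
  rewrite /Q /s.
  under eq_bigr => i _ do rewrite sqrrB.
  rewrite big_split /= sumrB sumr_const.
  idtac.
  idtac.
  rewrite sumrMnl -mulr_suml -[_ *+ 2]mulr_natl -[_ *+ #|P|]mulr_natl -/n. ring.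
rewrite E /c in H.
have : 0 <= n * (Q - 2 * (s / n) * s + n * (s / n) ^+ 2) by rewrite mulr_ge0 // ltW.
have -> : n * (Q - 2 * (s / n) * s + n * (s / n) ^+ 2) = n * Q - s ^+ 2.
  by field; rewrite gt_eqF.
by rewrite subr_ge0.
Qed.

Theorem lemma16 (R : realFieldType) (K : nat) (hK : (2 <= K)%N)
  (r : 'I_K -> R) (hr : forall a, 0 <= r a <= 1)
  (astar : 'I_K) (hastar : forall a, r a <= r astar)
  (pi : 'I_K -> R) (hpi : prob_vec pi) :
  \sum_(i < K) pi i ^+ 2 * `|r i - dotv pi r| ^+ 3
    >= gap r astar / (K - 1)%:R * (pi astar ^+ 2 * (r astar - dotv pi r) ^+ 2).
Proof.
case: hpi => hp0 hp1.
set m := dotv pi r.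
set D := gap r astar.
set k : R := (K - 1)%:R.
set p := pi astar.
have hk : 1 <= k by rewrite /k ler1n; case: K hK {r hr astar hastar pi hp0 hp1 m D k p} => [|[|K]].
have hm : m <= r astar.
  rewrite /m /dotv -[r astar]mul1r -hp1 mulr_suml; apply: ler_sum => i _.
  by rewrite ler_wpM2l.
have hz : p * (r astar - m) = \sum_(i | i != astar) pi i * (m - r i).
  have : \sum_(i < K) pi i * (r i - m) = 0.
    under eq_bigr => i _ do rewrite mulrBr.
    by rewrite sumrB -mulr_suml hp1 mul1r subrr.
  rewrite (bigD1 astar) //= => /eqP; rewrite addr_eq0 => /eqP ->.
  by rewrite -sumrN; apply: eq_bigr => i _; rewrite -mulrN opprB.
have hmax : forall i, i != astar -> r i <= r astar - D.
  move=> i hi; rewrite /D /gap opprB addrC subrK /max_other (bigD1 i) //=.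
  by rewrite le_max lexx.
have hL0 : forall i, 0 <= pi i ^+ 2 * `|r i - m| ^+ 3.
  by move=> i; rewrite mulr_ge0 // exprn_ge0.
have hX : 0 <= p ^+ 2 * (r astar - m) ^+ 2 by rewrite mulr_ge0 // sqr_ge0.
have hku : 0 < k^-1 <= 1.
  by rewrite invr_gt0 invf_le1 ?(lt_le_trans ltr01 hk) ?hk.
case/andP: hku => hu0 hu1.
case: (lerP D 0) => hD.
  apply: (@le_trans _ _ 0); last exact: sumr_ge0.
  by rewrite mulr_le0_ge0 // mulr_le0_ge0 // ltW.
set d := r astar - m.
have hd0 : 0 <= d by rewrite subr_ge0.
rewrite (bigD1 astar) //= -/p -/d (ger0_norm hd0) (mulrC D).
case: (lerP D d) => hDd.
  rewrite -[X in X <= _]addr0; apply: lerD; last exact: sumr_ge0.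
  have h1 : k^-1 * D <= d by nra.
  have -> : p ^+ 2 * d ^+ 3 = d * (p ^+ 2 * d ^+ 2) by ring.
  exact: ler_wpM2r.
have hneg : forall i, i != astar -> `|r i - m| = m - r i.
  move=> i hi; rewrite ler0_norm ?opprB //.
  have := hmax i hi; rewrite /d in hDd; lra.
have hy : forall i, i != astar -> D - d <= m - r i.
  move=> i hi; have := hmax i hi; rewrite /d; lra.
set S := \sum_(i | i != astar) (pi i * (m - r i)) ^+ 2.
have hT : (D - d) * S <= \sum_(i | i != astar) pi i ^+ 2 * `|r i - m| ^+ 3.
  rewrite /S mulr_sumr; apply: ler_sum => i hi.
  rewrite hneg //.
  have -> : pi i ^+ 2 * (m - r i) ^+ 3 = (m - r i) * (pi i * (m - r i)) ^+ 2 by ring.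
  by rewrite ler_wpM2r ?sqr_ge0 ?hy.
have hc : #|(fun i : 'I_K => i != astar)| = (K - 1)%N.
  by have := cardC1 astar; rewrite card_ord subn1.
have hcs : (p * d) ^+ 2 <= k * S.
  by rewrite /d hz /S /k -hc; apply: cs_sum.
have hS : k^-1 * (p * d) ^+ 2 <= S.
  have -> : S = k^-1 * (k * S) by rewrite mulrA mulVf ?mul1r // gt_eqF // (lt_le_trans ltr01 hk).
  by rewrite ler_wpM2l // ltW.
have h2 : (D - d) * (k^-1 * (p * d) ^+ 2) <= (D - d) * S.
  by rewrite ler_wpM2l // subr_ge0 ltW.
have h3 : 0 <= p ^+ 2 * d ^+ 2 * d * (1 - k^-1).
  by apply: mulr_ge0; [apply: mulr_ge0 | rewrite subr_ge0].
have e1 : (D - d) * (k^-1 * (p * d) ^+ 2) = k^-1 * D * (p ^+ 2 * d ^+ 2) - k^-1 * (p ^+ 2 * d ^+ 2) * d by ring.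
have e2 : p ^+ 2 * d ^+ 2 * d * (1 - k^-1) = p ^+ 2 * d ^+ 3 - k^-1 * (p ^+ 2 * d ^+ 2) * d by ring.
rewrite e1 in h2; rewrite e2 in h3.
lra.
Qed.
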